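(* Let $\omega\ge1$ and $n>2$ be integers, $r=2^\omega$, $R=2^{\omega n}$, and assume $n<r$. Let $p$ be a positive integer with $p<R$, let $r^{-1}$ be a positive integer with $rr^{-1}\equiv1\pmod p$, and set $p'=(rr^{-1}-1)/p$ (an integer). Let $T$ be an integer with $0\le T<pR$, and for $1\le i\le 2n$ let $T_i=\lfloor T/r^{i-1}\rfloor\bmod r$. For $1\le i\le n-2$ let $M_i\in\{0,\dots,p-1\}$ satisfy $M_i\equiv (r^{-1})^{\,n-i-1}\pmod p$, and let $H_i=M_iT_i$. Define $$T^{(n-2)}=\lfloor T/r^{n-2}\rfloor+\sum_{i=1}^{n-2}H_i,$$ and for $i=n-1,n$ define $Q_i=(T^{(i-1)}p')\bmod r$ and $T^{(i)}=(T^{(i-1)}+Q_ip)/r$. Let $U=T^{(n)}$; if $U\ge p$ replace $U$ by $U-p$; then again, if $U\ge p$ replace $U$ by $U-p$. Then all $T^{(i)}$ are integers and the final value satisfies $U=TR^{-1}\bmod p$, where $R^{-1}$ denotes an inverse of $R$ modulo $p$.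
   Context: Here $x\bmod m$ denotes the least nonnegative residue. The congruence $M_i\equiv r^{-n+i+1}\pmod p$ in the paper is interpreted with $r^{-1}$ the inverse of $r$ modulo $p$. The quantity $TR^{-1}\bmod p$ is the Montgomery reduction of $T$. *)

(* Defs.v *)
From mathcomp Require Import all_boot.
Set Implicit Arguments. Unset Strict Implicit. Unset Printing Implicit Defensive.

Definition Tdig (r T i : nat) : nat := (T %/ r ^ (i - 1)) %% r.

Definition montQ (r p' t : nat) : nat := (t * p') %% r.

Definition mont_step (r p p' t : nat) : nat := (t + montQ r p' t * p) %/ r.

Definition Tpre (r n T : nat) (M : nat -> nat) : nat :=
  T %/ r ^ (n - 2) + \sum_(1 <= i < n - 1) M i * Tdig r T i.

Definition csub (p U : nat) : nat := if p <= U then U - p else U.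

(* Main.v *)
Require Import Defs.
From mathcomp Require Import all_boot.
From mathcomp Require Import zify.

Lemma digits_decomp r T k : 0 < r ->
  T = r ^ k * (T %/ r ^ k) + \sum_(1 <= i < k.+1) r ^ (i - 1) * Tdig r T i.
Proof.
move=> r0; elim: k => [|k IH]; first by rewrite big_geq // expn0 mul1n divn1 addn0.
rewrite big_nat_recr //=.
have -> : Tdig r T k.+1 = (T %/ r ^ k) %% r by rewrite /Tdig subn1.
rewrite {1}IH.
have -> : T %/ r ^ k = (T %/ r ^ k.+1) * r + (T %/ r ^ k) %% r.
  by rewrite {1}(divn_eq (T %/ r ^ k) r) expnSr divnMA.
rewrite modnMDl modn_mod (mulnC _ r) mulnDr mulnA -expnSr subn1 /=; lia.
Qed.

Lemma step_dvd r p p' rinv t : 0 < rinv -> 0 < r -> r * rinv = 1 %[mod p] ->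
  p' = (r * rinv - 1) %/ p -> r %| t + montQ r p' t * p.
Proof.
move=> ri0 r0 Hr ->.
have pd : p %| r * rinv - 1.
  rewrite -eqn_mod_dvd; first by apply/eqP.
  by rewrite muln_gt0 r0 ri0.
rewrite /dvdn /montQ -modnDmr modnMml modnDmr -mulnA divnK //.
rewrite -{1}(muln1 t) -mulnDr subnKC ?muln_gt0 ?r0 ?ri0 //.
by rewrite mulnCA modnMr.
Qed.

Lemma sum_mod m k p F G : (forall i, m <= i < k -> F i = G i %[mod p]) ->
  \sum_(m <= i < k) F i = \sum_(m <= i < k) G i %[mod p].
Proof.
move=> h; rewrite -(modn_summ _ _ F) -(modn_summ _ _ G) !big_nat.
by congr (_ %% p); apply: eq_bigr => i /h.
Qed.

Lemma csub_mod p x : csub p x = x %[mod p].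
Proof. rewrite /csub; case: leqP => // h; by rewrite -{2}(subnK h) modnDr. Qed.

Lemma csub2 p x : x < 3 * p -> csub p (csub p x) < p.
Proof. move=> h; rewrite /csub; case: (leqP p x) => h1; [case: (leqP p (x - p)) => h3 | case: (leqP p x) => h3]; try case: leqP; lia. Qed.

Lemma pow_inv r rinv p k : r * rinv = 1 %[mod p] -> r ^ k * rinv ^ k = 1 %[mod p].
Proof. by move=> h; rewrite -expnMn -modnXm h modnXm exp1n. Qed.

Lemma T0_cong r n p rinv T (M : nat -> nat) : 0 < r -> 2 < n ->
  r * rinv = 1 %[mod p] ->
  (forall i, 1 <= i <= n - 2 -> M i < p /\ M i = rinv ^ (n - i - 1) %[mod p]) ->
  r ^ (n - 2) * Tpre r n T M = T %[mod p].
Proof.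
move=> r0 n2 hr hM.
rewrite {2}(@digits_decomp r T (n - 2) r0) /Tpre mulnDr.
have -> : (n - 2).+1 = n - 1 by lia.
rewrite -modnDmr -[in RHS]modnDmr; congr ((_ + _) %% p).
rewrite big_distrr /=; apply: sum_mod => i /andP[i1 i2].
have [_ hMi] := hM i (ltac:(clear -i1 i2 n2; lia)).
have e1 : r ^ (n - i - 1) * M i = 1 %[mod p].
  by rewrite -modnMmr hMi modnMmr; exact: pow_inv.
have e2 : r ^ (n - 2) * M i = r ^ (i - 1) %[mod p].
  have e : r ^ (n - 2) = r ^ (i - 1) * r ^ (n - i - 1).
    by rewrite -expnD; congr (_ ^ _); clear -i1 i2 n2; lia.
  by rewrite e -mulnA -modnMmr e1 modnMmr muln1.
by rewrite mulnA -modnMml e2 modnMml.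
Qed.
Theorem theorem2 (w n p rinv T Rinv : nat) (M : nat -> nat) :
  1 <= w -> 2 < n -> n < 2 ^ w ->
  0 < p -> p < 2 ^ (w * n) ->
  0 < rinv -> 2 ^ w * rinv = 1 %[mod p] ->
  T < p * 2 ^ (w * n) ->
  (forall i, 1 <= i <= n - 2 -> M i < p /\ M i = rinv ^ (n - i - 1) %[mod p]) ->
  2 ^ (w * n) * Rinv = 1 %[mod p] ->
  let r := 2 ^ w in
  let p' := (r * rinv - 1) %/ p in
  let T0 := Tpre r n T M in
  let T1 := mont_step r p p' T0 in
  let T2 := mont_step r p p' T1 in
  let U := csub p (csub p T2) in
  r %| T0 + montQ r p' T0 * p /\
  r %| T1 + montQ r p' T1 * p /\
  U = (T * Rinv) %% p.
Proof.
move=> w1 n2 nr p0 _ ri0 hr hT hM hR r p' T0 T1 T2 U.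
have r0 : 0 < r by rewrite expn_gt0.
have hRn : 2 ^ (w * n) = r ^ n by rewrite expnM.
rewrite hRn in hT hR.
have d0 : r %| T0 + montQ r p' T0 * p by exact: (@step_dvd r p p' rinv _ ri0 r0 hr erefl).
have d1 : r %| T1 + montQ r p' T1 * p by exact: (@step_dvd r p p' rinv _ ri0 r0 hr erefl).
split => //; split => //.
set Q0 := montQ r p' T0 in d0; set Q1 := montQ r p' T1 in d1.
have e1 : T1 * r = T0 + Q0 * p by rewrite /T1 /mont_step divnK.
have e2 : T2 * r = T1 + Q1 * p by rewrite /T2 /mont_step divnK.
have q0 : Q0 < r by rewrite /Q0 /montQ ltn_pmod.
have q1 : Q1 < r by rewrite /Q1 /montQ ltn_pmod.
have c0 := @T0_cong r n p rinv T M r0 n2 hr hM.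
have e3 : T2 * r * r = T0 + (Q0 + Q1 * r) * p.
  by rewrite e2 mulnDl e1 mulnDl -addnA mulnAC.
have e4 : r ^ n * T2 = r ^ (n - 2) * (T2 * r * r).
  have -> : r ^ n = r ^ (n - 2) * r * r.
    by rewrite -!expnSr; congr (_ ^ _); clear -n2; lia.
  by rewrite [T2 * r * r]mulnC [T2 * r]mulnC !mulnA.
have c1 : r ^ n * T2 = T %[mod p].
  by rewrite e4 -modnMmr e3 addnC modnMDl modnMmr.
have c2 : T2 = T * Rinv %[mod p].
  by rewrite -modnMml -c1 modnMml mulnAC -modnMml hR modnMml mul1n.
have hq : T %/ r ^ (n - 2) < p * r * r.
  rewrite ltn_divLR ?expn_gt0 ?r0 //.
  have -> : p * r * r * r ^ (n - 2) = p * r ^ n.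
    by rewrite -!mulnA -!expnS; congr (p * r ^ _); clear -n2; lia.
  exact: hT.
have hs : \sum_(1 <= i < n - 1) M i * Tdig r T i <= (n - 2) * ((p - 1) * (r - 1)).
  have -> : n - 2 = n - 1 - 1 by clear -n2; lia.
  rewrite -sum_nat_const_nat big_nat [X in _ <= X]big_nat.
  apply: leq_sum => i /andP[i1 i2].
  have [hMi _] := hM i (ltac:(clear -i1 i2 n2; lia)).
  apply: leq_mul; first by clear -hMi; lia.
  have : Tdig r T i < r by rewrite /Tdig ltn_pmod.
  clear; lia.
have hT0 : T0 < p * r * r + (n - 2) * ((p - 1) * (r - 1)).
  by rewrite /T0 /Tpre -addSn; apply: leq_add.
have hb : T2 < 3 * p.
  have h1 : Q0 + Q1 * r <= r * r - 1.
    have : Q1 * r <= (r - 1) * r by apply: leq_mul => //; clear -q1; lia.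
    clear -q0 r0; nia.
  have h2 : (n - 2) * ((p - 1) * (r - 1)) <= r * (p * r).
    apply: leq_mul; first by clear -nr; lia.
    by apply: leq_mul; clear; lia.
  have h3 : (Q0 + Q1 * r) * p <= (r * r - 1) * p by apply: leq_mul.
  have A : (Q0 + Q1 * r) * p <= p * (r * r) - p.
    by apply: (leq_trans h3); rewrite mulnBl mul1n [(r * r) * p]mulnC.
  have B : (n - 2) * ((p - 1) * (r - 1)) <= p * (r * r) by rewrite [r * (p * r)]mulnCA in h2.
  have C : T0 < p * (r * r) + (n - 2) * ((p - 1) * (r - 1)) by rewrite [p * (r * r)]mulnA.
  have h4 : T2 * (r * r) < (3 * p) * (r * r).
    rewrite mulnA e3 -mulnA.
    move: A B C; move: (p * (r * r)) ((n - 2) * ((p - 1) * (r - 1))) ((Q0 + Q1 * r) * p) (T0).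
    clear; lia.
  by rewrite ltn_pmul2r ?muln_gt0 ?r0 in h4.
have hU : U < p by apply: csub2.
by rewrite -(modn_small hU) /U !csub_mod.
Qed.
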